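(* Let $A\subseteq\mathbb R^2$ be measurable and let $\gamma\in\mathbb R\setminus\{0,-1\}$. Let $\lambda,\eta:A\to(0,\infty)$ be intensity functions with $\int_A\lambda$, $\int_A\eta$, $\int_A\lambda^{\gamma+1}$, $\int_A\eta^{\gamma+1}$ and $\int_A\lambda\eta^\gamma$ all finite, and let $P$ and $Q$ be the distributions of the Poisson point processes on $A$ with intensities $\lambda$ and $\eta$, with densities $p,q$ as described in the context. Define the log $\gamma$-divergence $$\Delta_\gamma(P,Q)=-\frac1\gamma\log\frac{\mathbb E_P[q(\Xi)^\gamma]}{\{\mathbb E_Q[q(\Xi)^\gamma]\}^{\gamma/(\gamma+1)}\{\mathbb E_P[p(\Xi)^\gamma]\}^{1/(\gamma+1)}}$$ and the $\beta$-divergence between intensity functions $$D_\beta(\lambda,\eta)=-\frac1\beta\int_A\Big\{\lambda(s)\eta(s)^\beta-\frac{\beta}{\beta+1}\eta(s)^{\beta+1}-\frac{1}{\beta+1}\lambda(s)^{\beta+1}\Big\}\mathrm ds.$$ Then $\Delta_\gamma(P,Q)=D_\beta(\lambda,\eta)$ when $\beta=\gamma$.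
   Context: A Poisson point process on $A$ with intensity $\lambda$ (with $\Lambda=\int_A\lambda(s)\mathrm ds<\infty$) is the random pair $\Xi=(M,\{S_1,\dots,S_M\})$ where $M\sim\mathrm{Poisson}(\Lambda)$ and, given $M=m$, $S_1,\dots,S_m$ are i.i.d. with density $\lambda(s)/\Lambda$ on $A$. Its density at $\xi=(m,\{s_1,\dots,s_m\})$ is $p(\xi)=\exp(-\Lambda)\prod_{i=1}^m\lambda(s_i)$, in the sense that for any suitable $g$, $\mathbb E_P[g(\Xi)]=\sum_{m=0}^\infty\frac{1}{m!}\int_{A^m}g(m,\{s_1,\dots,s_m\})\,p(m,\{s_1,\dots,s_m\})\,\mathrm ds_1\cdots\mathrm ds_m$. Similarly $q(\xi)=\exp(-H)\prod_{i=1}^m\eta(s_i)$ with $H=\int_A\eta$. *)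

(* Defs.v *)
From HB Require Import structures.
From mathcomp Require Import all_boot all_order all_algebra.
From mathcomp Require Import all_classical all_reals all_analysis.
Set Implicit Arguments. Unset Strict Implicit. Unset Printing Implicit Defensive.
Import Order.TTheory GRing.Theory Num.Theory.
Local Open Scope classical_set_scope.
Local Open Scope ring_scope.

Section PPP.
Context (R : realType).

Definition leb2 := (@lebesgue_measure R \x @lebesgue_measure R)%E.

Fixpoint iint (A : set (R * R)) (m : nat) (F : seq (R * R) -> \bar R) : \bar R :=
  match m with
  | 0 => F [::]
  | m'.+1 => (\int[leb2]_(x in A) iint A m' (fun s => F (x :: s)))%E
  end.

Definition total_int (A : set (R * R)) (lam : R * R -> R) : R :=
  fine (\int[leb2]_(x in A) (lam x)%:E)%E.

(* Density of the Poisson point process with intensity lam at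
   xi = (m, {s_1,...,s_m}) (represented by the list s, m = size s):
   p(xi) = exp(-Lambda) * prod_i lam(s_i). *)
Definition ppp_density (A : set (R * R)) (lam : R * R -> R) (s : seq (R * R)) : R :=
  expR (- total_int A lam) * \prod_(x <- s) lam x.

Definition ppp_expect (A : set (R * R)) (lam : R * R -> R)
    (g : seq (R * R) -> R) : \bar R :=
  (\sum_(m <oo) (((m`!)%:R)^-1)%:E * iint A m (fun s => (g s * ppp_density A lam s)%:E))%E.

Definition log_gamma_div (A : set (R * R)) (gam : R) (lam eta : R * R -> R) : R :=
  let p := ppp_density A lam in
  let q := ppp_density A eta in
  - gam^-1 * ln (fine (ppp_expect A lam (fun s => q s `^ gam)) /
      ((fine (ppp_expect A eta (fun s => q s `^ gam))) `^ (gam / (gam + 1)) *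
       (fine (ppp_expect A lam (fun s => p s `^ gam))) `^ ((gam + 1)^-1))).

Definition beta_div (A : set (R * R)) (beta : R) (lam eta : R * R -> R) : R :=
  - beta^-1 * fine (\int[leb2]_(x in A)
      (lam x * eta x `^ beta - beta / (beta + 1) * eta x `^ (beta + 1)
       - (beta + 1)^-1 * lam x `^ (beta + 1))%:E)%E.

End PPP.

(* Main.v *)
Require Import Defs.
From HB Require Import structures.
From mathcomp Require Import all_boot all_order all_algebra.
From mathcomp Require Import all_classical all_reals all_analysis.
From mathcomp Require Import ring measurable_realfun.
Import Order.TTheory GRing.Theory Num.Theory numFieldNormedType.Exports.
Local Open Scope classical_set_scope.
Local Open Scope ring_scope.

Section helpers.
Context (R : realType).
Implicit Types (A : set (R * R)).

Lemma iint_eq A m (F G : seq (R * R) -> \bar R) :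
  (forall s, (forall y, y \in s -> A y) -> F s = G s) -> iint A m F = iint A m G.
Proof.
elim: m F G => [|m IH] F G H /=; first by apply: H.
apply: eq_integral => x; rewrite inE => xA.
apply: IH => s hs; apply: H => y; rewrite in_cons => /orP[/eqP ->//|]; exact: hs.
Qed.

Lemma integrable_nonneg A (f : R * R -> R) : measurable A ->
  measurable_fun A f -> (forall x, A x -> 0 <= f x) ->
  (\int[@leb2 R]_(x in A) (f x)%:E < +oo)%E ->
  (@leb2 R).-integrable A (EFin \o f).
Proof.
move=> mA mf f0 fi; apply/integrableP; split; first exact/measurable_EFinP.
have -> : (\int[@leb2 R]_(x in A) `|(EFin \o f) x| = \int[@leb2 R]_(x in A) (f x)%:E)%E; last by [].
apply: eq_integral.
by move=> x; rewrite inE => xA /=; rewrite ger0_norm // f0.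
Qed.

Lemma iint_prod A (f : R * R -> R) (I : R) : measurable A ->
  measurable_fun A f -> (forall x, A x -> 0 <= f x) ->
  (\int[@leb2 R]_(x in A) (f x)%:E = I%:E)%E ->
  forall m c, iint A m (fun s => (c * \prod_(y <- s) f y)%:E) = (c * I ^+ m)%:E.
Proof.
move=> mA mf f0 fI m; elim: m => [|m IH] c /=; first by rewrite big_nil.
transitivity (\int[@leb2 R]_(x in A) ((c * I ^+ m)%:E * (f x)%:E))%E.
  apply: eq_integral => x _.
  transitivity (iint A m (fun s => ((c * f x) * \prod_(y <- s) f y)%:E)).
    by congr iint; apply: funext => s; rewrite big_cons mulrA.
  by rewrite IH -EFinM; congr EFin; ring.
rewrite integralZl //; last first.
  apply: integrable_nonneg => //; by rewrite fI ltry.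
by rewrite fI -EFinM exprS; congr EFin; ring.
Qed.

Lemma exp_series (L c : R) :
  (\sum_(m <oo) ((m`!%:R)^-1)%:E * (c * L ^+ m)%:E)%E = (c * expR L)%:E.
Proof.
have h : (c * series (exp_coeff L) n) @[n --> \oo] --> c * expR L.
  apply: cvgMr; exact: is_cvg_series_exp_coeff.
have -> : c * expR L = limn (fun n => c * series (exp_coeff L) n).
  by apply/esym/cvg_lim.
rewrite -EFin_lim; last by apply/cvg_ex; exists (c * expR L).
apply: congr_lim; apply: funext => n /=.
rewrite /series /= mulr_sumr sumEFin; congr EFin; apply: eq_bigr => k _.
by rewrite /exp_coeff /=; ring.
Qed.

Lemma expR_powR (a g : R) : expR a `^ g = expR (g * a).
Proof. by rewrite /powR expR_eq0 expRK. Qed.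

Lemma powR_prod (s : seq (R * R)) (f : R * R -> R) (g : R) :
  (forall y, y \in s -> 0 <= f y) ->
  (\prod_(y <- s) f y) `^ g = \prod_(y <- s) (f y `^ g).
Proof.
elim: s => [|a s IH] H; first by rewrite !big_nil powR1.
rewrite !big_cons powRM ?H ?mem_head //; last first.
  by rewrite big_seq; apply: prodr_ge0 => y ys; apply: H; rewrite in_cons ys orbT.
by rewrite IH // => y ys; apply: H; rewrite in_cons ys orbT.
Qed.

Lemma powS (x g : R) : 0 < x -> x * x `^ g = x `^ (g + 1).
Proof.
move=> x0; rewrite powRD; last by apply/implyP => _; rewrite gt_eqF.
by rewrite powRr1 ?ltW // mulrC.
Qed.

Lemma fine_int A (f : R * R -> R) : (forall x, A x -> 0 <= f x) ->
  (\int[@leb2 R]_(x in A) (f x)%:E < +oo)%E ->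
  (\int[@leb2 R]_(x in A) (f x)%:E)%E = (fine (\int[@leb2 R]_(x in A) (f x)%:E)%E)%:E.
Proof.
move=> f0 fi; rewrite fineK // ge0_fin_numE //.
by apply: integral_ge0 => x xA; rewrite lee_fin f0.
Qed.

Lemma expect_gen A (mu nu : R * R -> R) (g : R) : measurable A ->
  measurable_fun A mu -> measurable_fun A nu ->
  (forall x, A x -> 0 < mu x) -> (forall x, A x -> 0 < nu x) ->
  (\int[@leb2 R]_(x in A) (mu x * nu x `^ g)%:E < +oo)%E ->
  ppp_expect A mu (fun s => ppp_density A nu s `^ g) =
  (expR (- g * total_int A nu - total_int A mu
    + fine (\int[@leb2 R]_(x in A) (mu x * nu x `^ g)%:E)%E))%:E.
Proof.
move=> mA mmu mnu mu0 nu0 fi.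
set I := fine _.
have mf : measurable_fun A (fun x => mu x * nu x `^ g).
  apply: measurable_funM => //; exact: (measurableT_comp (@measurable_powR R g) mnu).
have f0 : forall x, A x -> 0 <= mu x * nu x `^ g.
  by move=> x xA; rewrite mulr_ge0 ?powR_ge0 ?ltW ?mu0.
have hI := @fine_int A _ f0 fi.
rewrite /ppp_expect.
transitivity (\sum_(m <oo) ((m`!%:R)^-1)%:E *
   (expR (- g * total_int A nu - total_int A mu) * I ^+ m)%:E)%E; last first.
  by rewrite exp_series !expRD.
apply: eq_eseriesr => m _; congr (_ * _)%E.
rewrite -(@iint_prod A _ _ mA mf f0 hI m (expR (- g * total_int A nu - total_int A mu))).
apply: iint_eq => s hs; congr EFin.
rewrite /ppp_density powRM ?expR_ge0 //; last first.
  by rewrite big_seq; apply: prodr_ge0 => y ys; exact/ltW/nu0/hs.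
rewrite expR_powR powR_prod; last by move=> y ys; exact/ltW/nu0/hs.
rewrite big_split /= expRD mulNr -mulrN mulrACA; congr (_ * _); exact: mulrC.
Qed.
End helpers.


Lemma ln_ratio (R : realType) (a b c u v : R) :
  ln (expR a / (expR b `^ u * expR c `^ v)) = a - (u * b + v * c).
Proof. by rewrite !expR_powR -expRD -expRB expRK. Qed.

Theorem mainTheorem10 (R : realType) (A : set (R * R)) (gam : R)
    (lam eta : R * R -> R) :
  measurable A ->
  gam != 0 -> gam != -1 ->
  measurable_fun A lam -> measurable_fun A eta ->
  (forall x, A x -> 0 < lam x) -> (forall x, A x -> 0 < eta x) ->
  (\int[@leb2 R]_(x in A) (lam x)%:E < +oo)%E ->
  (\int[@leb2 R]_(x in A) (eta x)%:E < +oo)%E ->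
  (\int[@leb2 R]_(x in A) (lam x `^ (gam + 1))%:E < +oo)%E ->
  (\int[@leb2 R]_(x in A) (eta x `^ (gam + 1))%:E < +oo)%E ->
  (\int[@leb2 R]_(x in A) (lam x * eta x `^ gam)%:E < +oo)%E ->
  log_gamma_div A gam lam eta = beta_div A gam lam eta.
Proof.
move=> mA g0 g1 ml me lp ep il ie ilp iep ile.
have eS : forall f : R * R -> R, (forall x, A x -> 0 < f x) ->
    (\int[@leb2 R]_(x in A) (f x * f x `^ gam)%:E)%E =
    (\int[@leb2 R]_(x in A) (f x `^ (gam + 1))%:E)%E.
  move=> f f0; apply: eq_integral => x; rewrite inE => xA; by rewrite powS ?f0.
have E1 := @expect_gen R A lam eta gam mA ml me lp ep ile.
have ie2 : (\int[@leb2 R]_(x in A) (eta x * eta x `^ gam)%:E < +oo)%E by rewrite (eS eta ep).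
have il2 : (\int[@leb2 R]_(x in A) (lam x * lam x `^ gam)%:E < +oo)%E by rewrite (eS lam lp).
have E2 := @expect_gen R A eta eta gam mA me me ep ep ie2.
have E3 := @expect_gen R A lam lam gam mA ml ml lp lp il2.
rewrite (eS eta ep) in E2; rewrite (eS lam lp) in E3.
rewrite /log_gamma_div /= E1 E2 E3 /=.
set H := total_int A eta; set La := total_int A lam.
set I1 := fine _; set I2 := fine _; set I3 := fine _.
rewrite ln_ratio.
have mf1 : measurable_fun A (fun x => lam x * eta x `^ gam).
  apply: measurable_funM => //; exact: (measurableT_comp (@measurable_powR R gam) me).
have mf2 : measurable_fun A (fun x => eta x `^ (gam + 1)).
  exact: (measurableT_comp (@measurable_powR R (gam + 1)) me).
have mf3 : measurable_fun A (fun x => lam x `^ (gam + 1)).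
  exact: (measurableT_comp (@measurable_powR R (gam + 1)) ml).
have p1 : forall x, A x -> 0 <= lam x * eta x `^ gam.
  by move=> x xA; rewrite mulr_ge0 ?powR_ge0 ?ltW ?lp.
have p2 : forall x, A x -> 0 <= eta x `^ (gam + 1) by move=> x _; exact: powR_ge0.
have p3 : forall x, A x -> 0 <= lam x `^ (gam + 1) by move=> x _; exact: powR_ge0.
have i1 := @integrable_nonneg R A _ mA mf1 p1 ile.
have i2 := @integrable_nonneg R A _ mA mf2 p2 iep.
have i3 := @integrable_nonneg R A _ mA mf3 p3 ilp.
have h1 := @fine_int R A _ p1 ile.
have h2 := @fine_int R A _ p2 iep.
have h3 := @fine_int R A _ p3 ilp.
rewrite /beta_div.
have -> : (\int[@leb2 R]_(x in A) (lam x * eta x `^ gam - (gam / (gam + 1)) * eta x `^ (gam + 1)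
       - (gam + 1)^-1 * lam x `^ (gam + 1))%:E)%E =
   (\int[@leb2 R]_(x in A) ((lam x * eta x `^ gam)%:E +
      ((- (gam / (gam + 1)))%:E * (eta x `^ (gam + 1))%:E + (- (gam + 1)^-1)%:E * (lam x `^ (gam + 1))%:E)))%E.
  apply: eq_integral => x _; rewrite -!EFinM -!EFinD; congr EFin; ring.
have i2' := @integrableZl _ _ _ (@leb2 R) A mA (- (gam / (gam + 1))) _ i2.
have i3' := @integrableZl _ _ _ (@leb2 R) A mA (- (gam + 1)^-1) _ i3.
rewrite (@integralD _ _ _ (@leb2 R) A mA _ _ i1 (@integrableD _ _ _ (@leb2 R) A mA _ _ i2' i3')).
rewrite (@integralD _ _ _ (@leb2 R) A mA _ _ i2' i3').
rewrite (@integralZl _ _ _ (@leb2 R) A mA _ i2) (@integralZl _ _ _ (@leb2 R) A mA _ i3) h1 h2 h3.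
rewrite -!EFinM -!EFinD /= -/I1 -/I2 -/I3.
have g1' : gam + 1 != 0 by rewrite addr_eq0.
congr (_ * _); field; exact: g1'.
Qed.
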